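(* The relation $\equiv_m$ of $m$-equivalence on $2^\mathbb{N}$ is $\Pi^0_2$-graphable with diameter $2$.
   Context: Subsets of $\mathbb{N}$ are identified with elements of $2^\mathbb{N}$. An $m$-reduction from $A$ to $B$ is a total computable $f:\mathbb{N}\to\mathbb{N}$ with $n\in A\iff f(n)\in B$ for all $n$; $A\le_m B$ if one exists, and $A\equiv_m B$ iff $A\le_m B$ and $B\le_m A$. An equivalence relation $E$ on a space $X$ is $\Gamma$-graphable (for a pointclass $\Gamma$, here lightface $\Pi^0_2$) if there is a simple undirected graph $G\subseteq X\times X$ in $\Gamma$ whose connectedness relation equals $E$; it is $\Gamma$-graphable with diameter $k$ if such a $G$ exists in which $k$ is the least integer such that any two $G$-connected points are joined by a path of length at most $k$. *)

(* Defs.v *)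
From Stdlib Require Import List Arith.
Import ListNotations.

Inductive recf : Type :=
| RZero : recf
| RSucc : recf
| RProj : nat -> recf                   (* i-th argument (0 if absent) *)
| RComp : recf -> list recf -> recf
| RPrec : recf -> recf -> recf          (* primitive recursion on first arg *)
| RMu   : recf -> recf.

Inductive eval : recf -> list nat -> nat -> Prop :=
| ev_zero : forall l, eval RZero l 0
| ev_succ : forall l, eval RSucc l (S (hd 0 l))
| ev_proj : forall i l, eval (RProj i) l (nth i l 0)
| ev_comp : forall f gs l vs v,
    evals gs l vs -> eval f vs v -> eval (RComp f gs) l v
| ev_prec0 : forall f g l v,
    eval f l v -> eval (RPrec f g) (0 :: l) v
| ev_precS : forall f g n l z v,
    eval (RPrec f g) (n :: l) z -> eval g (n :: z :: l) v ->
    eval (RPrec f g) (S n :: l) v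
| ev_mu : forall f l n,
    eval f (n :: l) 0 ->
    (forall m, m < n -> exists k, eval f (m :: l) (S k)) ->
    eval (RMu f) l n
with evals : list recf -> list nat -> list nat -> Prop :=
| evs_nil : forall l, evals [] l []
| evs_cons : forall g gs l v vs,
    eval g l v -> evals gs l vs -> evals (g :: gs) l (v :: vs).

Definition computable (f : nat -> nat) : Prop :=
  exists p : recf, forall n, eval p [n] (f n).

Definition cantor := nat -> bool.

Definition mred (A B : cantor) : Prop :=
  exists f : nat -> nat, computable f /\ forall n, A n = B (f n).

Definition meq (A B : cantor) : Prop := mred A B /\ mred B A.

(* Code of the finite prefix x|m = x(0)...x(m-1) as a natural number
   (binary with a leading 1):  2^m + sum_{i<m} x(i) 2^i.  Injective on
   finite binary strings. *)
Fixpoint prefix_code (x : cantor) (m : nat) : nat :=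
  match m with
  | 0 => 1
  | S m' => 2 * prefix_code (fun i => x (S i)) m' + (if x 0 then 1 else 0)
  end.

(* Lightface Pi^0_2 subsets of 2^N x 2^N:  P(x,y) <-> forall n, exists m,
   R(n, m, x|m, y|m) for a (total) computable relation R, here given by
   a total mu-recursive program p with R = "p outputs 0". *)
Definition pi02_2 (P : cantor -> cantor -> Prop) : Prop :=
  exists p : recf,
    (forall n m a b, exists v, eval p [n; m; a; b] v) /\
    (forall x y, P x y <->
       forall n, exists m, eval p [n; m; prefix_code x m; prefix_code y m] 0).

Definition simple_graph {X : Type} (G : X -> X -> Prop) : Prop :=
  (forall x y, G x y -> G y x) /\ (forall x, ~ G x x).

Fixpoint walk {X : Type} (G : X -> X -> Prop) (k : nat) (x y : X) : Prop :=
  match k with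
  | 0 => x = y
  | S k' => exists z, G x z /\ walk G k' z y
  end.

Definition connected {X : Type} (G : X -> X -> Prop) (x y : X) : Prop :=
  exists k, walk G k x y.

Definition diam_le {X : Type} (G : X -> X -> Prop) (k : nat) : Prop :=
  forall x y, connected G x y -> exists j, j <= k /\ walk G j x y.

Definition diameter {X : Type} (G : X -> X -> Prop) (k : nat) : Prop :=
  diam_le G k /\ forall j, j < k -> ~ diam_le G j.

Definition pi02_graphable_diam (E : cantor -> cantor -> Prop) (k : nat) : Prop :=
  exists G : cantor -> cantor -> Prop,
    pi02_2 G /\ simple_graph G /\
    (forall x y, connected G x y <-> E x y) /\
    diameter G k.

(* Main.v *)
Require Import Defs.
From Stdlib Require Import List Arith Lia Bool.
From Stdlib Require Import Classical FunctionalExtensionality ClassicalEpsilon.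
Import ListNotations.

Section Strong.
Variable P : recf -> list nat -> nat -> Prop.
Variable Q : list recf -> list nat -> list nat -> Prop.
Hypothesis Hz : forall l, P RZero l 0.
Hypothesis Hs : forall l, P RSucc l (S (hd 0 l)).
Hypothesis Hp : forall i l, P (RProj i) l (nth i l 0).
Hypothesis Hc : forall f gs l vs v, evals gs l vs -> Q gs l vs -> eval f vs v -> P f vs v -> P (RComp f gs) l v.
Hypothesis Hp0 : forall f g l v, eval f l v -> P f l v -> P (RPrec f g) (0 :: l) v.
Hypothesis HpS : forall f g n l z v, eval (RPrec f g) (n :: l) z -> P (RPrec f g) (n :: l) z -> eval g (n :: z :: l) v -> P g (n :: z :: l) v -> P (RPrec f g) (S n :: l) v.
Hypothesis Hmu : forall f l n, eval f (n :: l) 0 -> P f (n :: l) 0 ->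
    (forall m, m < n -> exists k, eval f (m :: l) (S k) /\ P f (m :: l) (S k)) -> P (RMu f) l n.
Hypothesis Qn : forall l, Q [] l [].
Hypothesis Qc : forall g gs l v vs, eval g l v -> P g l v -> evals gs l vs -> Q gs l vs -> Q (g :: gs) l (v :: vs).
Fixpoint eval_strong p l v (H : eval p l v) {struct H} : P p l v :=
  match H in eval p l v return P p l v with
  | ev_zero l => Hz l
  | ev_succ l => Hs l
  | ev_proj i l => Hp i l
  | ev_comp f gs l vs v H1 H2 => Hc f gs l vs v H1 (evals_strong _ _ _ H1) H2 (eval_strong _ _ _ H2)
  | ev_prec0 f g l v H1 => Hp0 f g l v H1 (eval_strong _ _ _ H1)
  | ev_precS f g n l z v H1 H2 => HpS f g n l z v H1 (eval_strong _ _ _ H1) H2 (eval_strong _ _ _ H2)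
  | ev_mu f l n H1 H2 => Hmu f l n H1 (eval_strong _ _ _ H1)
      (fun m Hm => match H2 m Hm with ex_intro _ k Hk => ex_intro _ k (conj Hk (eval_strong _ _ _ Hk)) end)
  end
with evals_strong gs l vs (H : evals gs l vs) {struct H} : Q gs l vs :=
  match H in evals gs l vs return Q gs l vs with
  | evs_nil l => Qn l
  | evs_cons g gs l v vs H1 H2 => Qc g gs l v vs H1 (eval_strong _ _ _ H1) H2 (evals_strong _ _ _ H2)
  end.
End Strong.

Lemma eval_det : forall p l v, eval p l v -> forall v', eval p l v' -> v = v'.
Proof.
  apply (eval_strong (fun p l v => forall v', eval p l v' -> v = v')
                     (fun gs l vs => forall vs', evals gs l vs' -> vs = vs')).
  - intros l v' H; inversion H; auto.
  - intros l v' H; inversion H; auto.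
  - intros i l v' H; inversion H; auto.
  - intros f gs l vs v _ IH1 _ IH2 v' H; inversion H; subst.
    match goal with Hx : evals gs l ?w |- _ => apply IH1 in Hx end; subst; auto.
  - intros f g l v _ IH v' H; inversion H; subst; auto.
  - intros f g n l z v _ IH1 _ IH2 v' H; inversion H; subst.
    match goal with Hx : eval (RPrec f g) (n :: l) ?w |- _ => apply IH1 in Hx end; subst; auto.
  - intros f l n _ IH1 IH2 v' H; inversion H; subst.
    destruct (lt_eq_lt_dec n v') as [[Hlt|Heq]|Hlt]; auto.
    + match goal with Hx : forall m, m < v' -> _ |- _ => destruct (Hx n Hlt) as [k Hk] end.
      apply IH1 in Hk; discriminate.
    + destruct (IH2 v' Hlt) as [k [_ Hk]].
      match goal with Hx : eval f (v' :: l) 0 |- _ => apply Hk in Hx end; discriminate.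
  - intros l vs' H; inversion H; auto.
  - intros g gs l v vs _ IH1 _ IH2 vs' H; inversion H; subst.
    f_equal; auto.
Qed.

Lemma ev_eq : forall p l v w, eval p l v -> v = w -> eval p l w.
Proof. intros; subst; auto. Qed.

Definition addR := RPrec (RProj 0) (RComp RSucc [RProj 1]).
Lemma addR_ok : forall a b, eval addR [a; b] (a + b).
Proof.
  induction a; intros b.
  - apply ev_prec0. apply (ev_proj 0 [b]).
  - eapply ev_precS. apply IHa.
    eapply ev_comp. apply evs_cons. apply ev_proj. apply evs_nil.
    apply ev_succ.
Qed.

Definition predR := RPrec RZero (RProj 0).
Lemma predR_ok : forall a, eval predR [a] (pred a).
Proof.
  induction a.
  - apply ev_prec0, ev_zero.
  - eapply ev_precS. apply IHa. apply (ev_proj 0).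
Qed.

Definition subR' := RPrec (RProj 0) (RComp predR [RProj 1]).
Lemma subR'_ok : forall b a, eval subR' [b; a] (a - b).
Proof.
  induction b; intros a.
  - apply ev_prec0. eapply ev_eq. apply (ev_proj 0 [a]). simpl; lia.
  - eapply ev_precS. apply IHb.
    eapply ev_comp. apply evs_cons. apply ev_proj. apply evs_nil.
    eapply ev_eq. apply predR_ok. simpl. lia.
Qed.

Definition subR := RComp subR' [RProj 1; RProj 0].
Lemma subR_ok : forall a b, eval subR [a; b] (a - b).
Proof.
  intros. eapply ev_comp.
  apply evs_cons. apply ev_proj. apply evs_cons. apply ev_proj. apply evs_nil.
  apply subR'_ok.
Qed.

Definition ifzR := RPrec (RProj 0) (RProj 3).
Lemma ifzR_ok : forall c t e, eval ifzR [c; t; e] (match c with 0 => t | S _ => e end).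
Proof.
  destruct c; intros.
  - apply ev_prec0. apply (ev_proj 0 [t; e]).
  - assert (forall c, exists z, eval ifzR [c; t; e] z) as Hc.
    { clear. induction c. eexists; apply ev_prec0. apply (ev_proj 0 [t;e]).
      destruct IHc as [z Hz]. eexists. eapply ev_precS. apply Hz. apply ev_proj. }
    destruct (Hc c) as [z Hz]. eapply ev_precS. apply Hz. eapply ev_eq. apply ev_proj. reflexivity.
Qed.

Definition ap1 q a := RComp q [a].
Definition ap2 q a b := RComp q [a; b].
Definition ap3 q a b c := RComp q [a; b; c].
Lemma ap1_ok : forall q a l x y, eval a l x -> eval q [x] y -> eval (ap1 q a) l y.
Proof. intros. eapply ev_comp; eauto. repeat constructor; auto. Qed.
Lemma ap2_ok : forall q a b l x x' y, eval a l x -> eval b l x' -> eval q [x; x'] y -> eval (ap2 q a b) l y.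
Proof. intros. eapply ev_comp; eauto. repeat constructor; auto. Qed.
Lemma ap3_ok : forall q a b c l x x' x'' y, eval a l x -> eval b l x' -> eval c l x'' ->
  eval q [x; x'; x''] y -> eval (ap3 q a b c) l y.
Proof. intros. eapply ev_comp; eauto. repeat constructor; auto. Qed.
Lemma proj_ok : forall i l v, nth i l 0 = v -> eval (RProj i) l v.
Proof. intros; subst; constructor. Qed.
Lemma succ_ok : forall a l x, eval a l x -> eval (ap1 RSucc a) l (S x).
Proof. intros. eapply ap1_ok; eauto. apply ev_succ. Qed.

Fixpoint tri n := match n with 0 => 0 | S m => tri m + S m end.
Definition npair a b := tri (a + b) + b.
Fixpoint wd c := match c with 0 => 0 | S c' => if tri (S (wd c')) =? S c' then S (wd c') else wd c' end.
Definition nsnd c := c - tri (wd c).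
Definition nfst c := wd c - nsnd c.

Lemma tri_mono : forall a b, a <= b -> tri a <= tri b.
Proof. intros a b H; induction H; simpl; lia. Qed.
Lemma tri_lt : forall a b, a < b -> tri a + a < tri b.
Proof. intros a b H; induction H; simpl; lia. Qed.

Lemma wd_spec : forall c, tri (wd c) <= c < tri (S (wd c)).
Proof.
  induction c; simpl. lia.
  destruct (Nat.eqb_spec (tri (wd c) + S (wd c)) (S c)); simpl in *; lia.
Qed.

Lemma wd_uniq : forall c w, tri w <= c < tri (S w) -> wd c = w.
Proof.
  intros c w H. pose proof (wd_spec c).
  destruct (lt_eq_lt_dec (wd c) w) as [[Hl|]|Hl]; auto.
  - apply tri_lt in Hl. simpl in *. lia.
  - apply tri_lt in Hl. simpl in *. lia.
Qed.

Lemma wd_pair : forall a b, wd (npair a b) = a + b.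
Proof. intros; apply wd_uniq; unfold npair; simpl; lia. Qed.
Lemma nsnd_pair : forall a b, nsnd (npair a b) = b.
Proof. intros; unfold nsnd; rewrite wd_pair; unfold npair; lia. Qed.
Lemma nfst_pair : forall a b, nfst (npair a b) = a.
Proof. intros; unfold nfst; rewrite wd_pair, nsnd_pair; lia. Qed.
Lemma pair_surj : forall c, npair (nfst c) (nsnd c) = c.
Proof.
  intros c; pose proof (wd_spec c); unfold npair, nfst, nsnd; simpl in *.
  replace (wd c - (c - tri (wd c)) + (c - tri (wd c))) with (wd c) by lia. lia.
Qed.
Lemma npair_ge : forall a b, a <= npair a b /\ b <= npair a b.
Proof.
  intros; unfold npair. assert (a + b <= tri (a + b)).
  { induction (a+b); simpl; lia. } lia.
Qed.

Definition triR := RPrec RZero (ap2 addR (RProj 1) (ap1 RSucc (RProj 0))).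
Lemma triR_ok : forall n, eval triR [n] (tri n).
Proof.
  induction n. apply ev_prec0, ev_zero.
  eapply ev_precS. apply IHn. eapply ap2_ok. apply proj_ok; reflexivity.
  apply succ_ok, proj_ok; reflexivity. apply addR_ok.
Qed.

Definition eqR a b := ap2 addR (ap2 subR a b) (ap2 subR b a).
Lemma eqR_ok : forall a b l x y, eval a l x -> eval b l y -> eval (eqR a b) l ((x - y) + (y - x)).
Proof.
  intros. eapply ap2_ok. eapply ap2_ok; eauto. apply subR_ok.
  eapply ap2_ok; eauto. apply subR_ok. apply addR_ok.
Qed.

Lemma ifz_eq : forall A x y (t e : A), match (x - y) + (y - x) with 0 => t | S _ => e end = if x =? y then t else e.
Proof. intros. destruct (Nat.eqb_spec x y). subst. rewrite Nat.sub_diag. reflexivity.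
  destruct (x - y + (y - x)) eqn:E. lia. reflexivity. Qed.

Definition wdR := RPrec RZero
  (ap3 ifzR (eqR (ap1 triR (ap1 RSucc (RProj 1))) (ap1 RSucc (RProj 0)))
            (ap1 RSucc (RProj 1)) (RProj 1)).
Lemma wdR_ok : forall c, eval wdR [c] (wd c).
Proof.
  induction c. apply ev_prec0, ev_zero.
  eapply ev_precS. apply IHc.
  eapply ap3_ok. apply eqR_ok. eapply ap1_ok. apply succ_ok, proj_ok. reflexivity.
  apply triR_ok. apply succ_ok, proj_ok; reflexivity.
  apply succ_ok, proj_ok; reflexivity. apply proj_ok; reflexivity.
  eapply ev_eq. apply ifzR_ok. rewrite ifz_eq. reflexivity.
Qed.

Definition nsndR := ap2 subR (RProj 0) (ap1 triR wdR).
Lemma nsndR_ok : forall c, eval nsndR [c] (nsnd c).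
Proof.
  intros. eapply ap2_ok. apply proj_ok; reflexivity. eapply ap1_ok. apply wdR_ok. apply triR_ok.
  apply subR_ok.
Qed.
Definition nfstR := ap2 subR wdR nsndR.
Lemma nfstR_ok : forall c, eval nfstR [c] (nfst c).
Proof. intros. eapply ap2_ok. apply wdR_ok. apply nsndR_ok. apply subR_ok. Qed.
Definition npairR := ap2 addR (ap1 triR addR) (RProj 1).
Lemma npairR_ok : forall a b, eval npairR [a; b] (npair a b).
Proof. intros. eapply ap2_ok. eapply ap1_ok. apply addR_ok. apply triR_ok. apply proj_ok; reflexivity. apply addR_ok. Qed.

Inductive exp : Type :=
| EIn | EConst (n : nat) | EAdd (a b : exp) | ESub (a b : exp)
| EPair (a b : exp) | EFst (a : exp) | ESnd (a : exp)
| EIfz (c t e : exp) | EPrec (n b s : exp) | EComp (f a : exp).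

Fixpoint den (e : exp) (x : nat) : nat :=
  match e with
  | EIn => x
  | EConst n => n
  | EAdd a b => den a x + den b x
  | ESub a b => den a x - den b x
  | EPair a b => npair (den a x) (den b x)
  | EFst a => nfst (den a x)
  | ESnd a => nsnd (den a x)
  | EIfz c t e => match den c x with 0 => den t x | S _ => den e x end
  | EPrec n b s => nat_rect (fun _ => nat) (den b x) (fun i r => den s (npair i (npair r x))) (den n x)
  | EComp f a => den f (den a x)
  end.

Fixpoint constR n := match n with 0 => RZero | S m => ap1 RSucc (constR m) end.
Lemma constR_ok : forall n l, eval (constR n) l n.
Proof. induction n; intros; simpl. apply ev_zero. apply succ_ok; auto. Qed.

Fixpoint compile (e : exp) : recf :=
  match e with
  | EIn => RProj 0
  | EConst n => constR n
  | EAdd a b => ap2 addR (compile a) (compile b)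
  | ESub a b => ap2 subR (compile a) (compile b)
  | EPair a b => ap2 npairR (compile a) (compile b)
  | EFst a => ap1 nfstR (compile a)
  | ESnd a => ap1 nsndR (compile a)
  | EIfz c t e => ap3 ifzR (compile c) (compile t) (compile e)
  | EPrec n b s => RComp (RPrec (compile b)
        (ap1 (compile s) (ap2 npairR (RProj 0) (ap2 npairR (RProj 1) (RProj 2)))))
        [compile n; RProj 0]
  | EComp f a => ap1 (compile f) (compile a)
  end.

Lemma compile_ok : forall e l, eval (compile e) l (den e (nth 0 l 0)).
Proof.
  induction e; intros l; simpl.
  - apply proj_ok; reflexivity.
  - apply constR_ok.
  - eapply ap2_ok; eauto. apply addR_ok.
  - eapply ap2_ok; eauto. apply subR_ok.
  - eapply ap2_ok; eauto. apply npairR_ok.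
  - eapply ap1_ok; eauto. apply nfstR_ok.
  - eapply ap1_ok; eauto. apply nsndR_ok.
  - eapply ap3_ok; eauto. apply ifzR_ok.
  - eapply ev_comp. repeat constructor. apply IHe1.
    simpl. generalize (den e1 (nth 0 l 0)) as k. induction k; simpl.
    + apply ev_prec0. apply (IHe2 [_]).
    + eapply ev_precS. apply IHk. eapply ap1_ok.
      eapply ap2_ok. apply proj_ok; reflexivity. eapply ap2_ok. apply proj_ok; reflexivity.
      apply proj_ok; reflexivity. apply npairR_ok. apply npairR_ok. apply (IHe3 [_]).
  - eapply ap1_ok; eauto.
Qed.

Lemma compile_ok1 : forall e x, eval (compile e) [x] (den e x).
Proof. intros. apply (compile_ok e [x]). Qed.

Definition ncons x l := S (npair x l).
Fixpoint encl (l : list nat) : nat := match l with [] => 0 | x :: r => ncons x (encl r) end.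
Definition hdN l := match l with 0 => 0 | S y => nfst y end.
Definition tlN l := match l with 0 => 0 | S y => nsnd y end.
Lemma hdN_cons : forall x l, hdN (ncons x l) = x.
Proof. intros; unfold hdN, ncons; apply nfst_pair. Qed.
Lemma tlN_cons : forall x l, tlN (ncons x l) = l.
Proof. intros; unfold tlN, ncons; apply nsnd_pair. Qed.
Lemma hdN_encl : forall l, hdN (encl l) = hd 0 l.
Proof. destruct l; simpl; auto. apply hdN_cons. Qed.
Lemma tlN_encl : forall l, tlN (encl l) = encl (tl l).
Proof. destruct l; simpl; auto. apply tlN_cons. Qed.
Lemma encl_len : forall l, length l <= encl l.
Proof. induction l; simpl; auto. unfold ncons. pose proof (npair_ge a (encl l)). lia. Qed.
Lemma ncons_neq0 : forall x l, ncons x l = 0 -> False.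
Proof. discriminate. Qed.

Lemma den_comp : forall f a x, den (EComp f a) x = den f (den a x). Proof. reflexivity. Qed.
Lemma den_in : forall x, den EIn x = x. Proof. reflexivity. Qed.
Lemma den_const : forall n x, den (EConst n) x = n. Proof. reflexivity. Qed.
Lemma den_add : forall a b x, den (EAdd a b) x = den a x + den b x. Proof. reflexivity. Qed.
Lemma den_sub : forall a b x, den (ESub a b) x = den a x - den b x. Proof. reflexivity. Qed.
Lemma den_pair : forall a b x, den (EPair a b) x = npair (den a x) (den b x). Proof. reflexivity. Qed.
Lemma den_fst : forall a x, den (EFst a) x = nfst (den a x). Proof. reflexivity. Qed.
Lemma den_snd : forall a x, den (ESnd a) x = nsnd (den a x). Proof. reflexivity. Qed.
Lemma den_ifz : forall c t e x, den (EIfz c t e) x = match den c x with 0 => den t x | S _ => den e x end.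
Proof. reflexivity. Qed.
Global Hint Rewrite den_comp den_in den_const den_add den_sub den_pair den_fst den_snd den_ifz
  nfst_pair nsnd_pair : dn.

Definition hdE := EIfz EIn (EConst 0) (EFst (ESub EIn (EConst 1))).
Definition tlE := EIfz EIn (EConst 0) (ESnd (ESub EIn (EConst 1))).
Lemma den_hdE : forall x, den hdE x = hdN x.
Proof. destruct x; simpl; auto. rewrite Nat.sub_0_r. auto. Qed.
Lemma den_tlE : forall x, den tlE x = tlN x.
Proof. destruct x; simpl; auto. rewrite Nat.sub_0_r. auto. Qed.
Definition consE a b := EAdd (EPair a b) (EConst 1).
Lemma den_consE : forall a b x, den (consE a b) x = ncons (den a x) (den b x).
Proof. intros; simpl; unfold ncons; lia. Qed.

Lemma den_prec_iter : forall n b s x F,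
  (forall i r, den s (npair i (npair r x)) = F r) ->
  den (EPrec n b s) x = Nat.iter (den n x) F (den b x).
Proof.
  intros n b s x F H. cbn [den]. generalize (den n x) as k.
  induction k; cbn [nat_rect Nat.iter]; auto. rewrite H, IHk; auto.
Qed.

Definition nthE := EComp hdE (EPrec (EFst EIn) (ESnd EIn) (EComp tlE (EFst (ESnd EIn)))).
Lemma skipn_S_tl : forall i (l : list nat), skipn (S i) l = tl (skipn i l).
Proof. induction i; intros [|a l]; simpl; auto. rewrite <- IHi. destruct l; auto. Qed.
Lemma iter_tl : forall i l, Nat.iter i tlN (encl l) = encl (skipn i l).
Proof.
  induction i; intros l; simpl; auto.
  rewrite IHi, tlN_encl, <- skipn_S_tl. auto.
Qed.
Lemma hd_skipn : forall i (l : list nat), hd 0 (skipn i l) = nth i l 0.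
Proof. induction i; intros [|a l]; simpl; auto. Qed.
Lemma den_nthE : forall i l, den nthE (npair i (encl l)) = nth i l 0.
Proof.
  intros i l. unfold nthE. rewrite den_comp, den_hdE.
  rewrite (den_prec_iter _ _ _ _ tlN).
  - autorewrite with dn. rewrite iter_tl, hdN_encl. apply hd_skipn.
  - intros. autorewrite with dn. rewrite den_tlE. auto.
Qed.

Definition revstep := EIfz (EFst EIn) EIn (EPair (EComp tlE (EFst EIn)) (consE (EComp hdE (EFst EIn)) (ESnd EIn))).
Definition revE := ESnd (EPrec EIn (EPair EIn (EConst 0)) (EComp revstep (EFst (ESnd EIn)))).
Definition revF r := match nfst r with 0 => r | S _ => npair (tlN (nfst r)) (ncons (hdN (nfst r)) (nsnd r)) end.
Lemma revF_iter : forall k l a, length l <= k ->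
  Nat.iter k revF (npair (encl l) (encl a)) = npair 0 (encl (rev l ++ a)).
Proof.
  induction k; intros l a H.
  - destruct l; simpl in *; auto. lia.
  - rewrite Nat.iter_succ_r. destruct l as [|x l].
    + simpl. unfold revF. rewrite nfst_pair. simpl.
      clear. induction k; simpl; auto. rewrite IHk. unfold revF; rewrite nfst_pair; auto.
    + unfold revF at 2. rewrite nfst_pair. simpl encl. unfold ncons at 1.
      rewrite nsnd_pair. fold (ncons x (encl l)). rewrite tlN_cons, hdN_cons.
      change (ncons x (encl a)) with (encl (x :: a)). rewrite IHk. simpl. rewrite <- app_assoc. auto.
      simpl in H; lia.
Qed.
Lemma den_revE : forall l, den revE (encl l) = encl (rev l).
Proof.
  intros l. unfold revE. rewrite den_snd.
  rewrite (den_prec_iter _ _ _ _ revF).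
  - autorewrite with dn. change (npair (encl l) 0) with (npair (encl l) (encl [])). rewrite revF_iter. rewrite nsnd_pair, app_nil_r; auto.
    apply encl_len.
  - intros. unfold revstep. autorewrite with dn. unfold revF.
    destruct (nfst r) eqn:E; auto. rewrite den_consE. autorewrite with dn. rewrite den_tlE, den_hdE, E. auto.
Qed.

Fixpoint code (p : recf) : nat :=
  match p with
  | RZero => npair 0 0
  | RSucc => npair 1 0
  | RProj i => npair 2 i
  | RComp f gs => npair 3 (npair (code f) (encl (map code gs)))
  | RPrec f g => npair 4 (npair (code f) (code g))
  | RMu f => npair 5 (code f)
  end.

Definition cEv p l := npair 0 (npair p l).
Definition cRet v := npair 1 v.
Definition fComp f r l a := npair 0 (npair f (npair r (npair l a))).
Definition fPrec g i n l := npair 1 (npair g (npair i (npair n l))).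
Definition fMu f i l := npair 2 (npair f (npair i l)).

Definition Cx := EFst EIn.
Definition KK := ESnd EIn.
Definition Px := EFst (ESnd Cx).
Definition Lx := ESnd (ESnd Cx).
Definition Tx := EFst Px.
Definition Ax := ESnd Px.
Definition evE p l k := EPair (EPair (EConst 0) (EPair p l)) k.
Definition retE v k := EPair (EPair (EConst 1) v) k.
Definition hdX a := EComp hdE a.
Definition tlX a := EComp tlE a.
Definition nthX i l := EComp nthE (EPair i l).
Definition revX a := EComp revE a.
Definition decE n a := ESub a (EConst n).
Definition succE a := EAdd a (EConst 1).
Definition eqE a b := EAdd (ESub a b) (ESub b a).
Definition fCompE f r l a := EPair (EConst 0) (EPair f (EPair r (EPair l a))).
Definition fPrecE g i n l := EPair (EConst 1) (EPair g (EPair i (EPair n l))).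
Definition fMuE f i l := EPair (EConst 2) (EPair f (EPair i l)).

Definition evalpart :=
 EIfz Tx (retE (EConst 0) KK)
 (EIfz (decE 1 Tx) (retE (succE (hdX Lx)) KK)
 (EIfz (decE 2 Tx) (retE (nthX Ax Lx) KK)
 (EIfz (decE 3 Tx) (EIfz (ESnd Ax) (evE (EFst Ax) (EConst 0) KK)
        (evE (hdX (ESnd Ax)) Lx (consE (fCompE (EFst Ax) (tlX (ESnd Ax)) Lx (EConst 0)) KK)))
 (EIfz (decE 4 Tx) (EIfz Lx EIn
        (evE (EFst Ax) (tlX Lx) (consE (fPrecE (ESnd Ax) (EConst 0) (hdX Lx) (tlX Lx)) KK)))
 (EIfz (decE 5 Tx) (evE Ax (consE (EConst 0) Lx) (consE (fMuE Ax (EConst 0) Lx) KK))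
  EIn))))).

Definition Vx := ESnd Cx.
Definition FR := hdX KK.
Definition K' := tlX KK.
Definition FT := EFst FR.
Definition FA := ESnd FR.
Definition retpart :=
 EIfz KK EIn
 (EIfz FT
   (EIfz (EFst (ESnd FA))
      (evE (EFst FA) (revX (consE Vx (ESnd (ESnd (ESnd FA))))) K')
      (evE (hdX (EFst (ESnd FA))) (EFst (ESnd (ESnd FA)))
          (consE (fCompE (EFst FA) (tlX (EFst (ESnd FA))) (EFst (ESnd (ESnd FA)))
                          (consE Vx (ESnd (ESnd (ESnd FA))))) K')))
 (EIfz (decE 1 FT)
   (EIfz (eqE (EFst (ESnd FA)) (EFst (ESnd (ESnd FA))))
      (retE Vx K')
      (evE (EFst FA) (consE (EFst (ESnd FA)) (consE Vx (ESnd (ESnd (ESnd FA)))))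
         (consE (fPrecE (EFst FA) (succE (EFst (ESnd FA))) (EFst (ESnd (ESnd FA))) (ESnd (ESnd (ESnd FA)))) K')))
 (EIfz (decE 2 FT)
   (EIfz Vx (retE (EFst (ESnd FA)) K')
      (evE (EFst FA) (consE (succE (EFst (ESnd FA))) (ESnd (ESnd FA)))
         (consE (fMuE (EFst FA) (succE (EFst (ESnd FA))) (ESnd (ESnd FA))) K')))
  EIn))).

Definition stepE := EIfz (EFst Cx) evalpart retpart.
Definition step x := den stepE x.

Arguments npair : simpl never.
Arguments nfst : simpl never.
Arguments nsnd : simpl never.
Arguments den : simpl never.
Arguments hdN : simpl never.
Arguments tlN : simpl never.

Opaque hdE tlE nthE revE.
Lemma hdN_S : forall y, hdN (S y) = nfst y. Proof. reflexivity. Qed.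
Lemma tlN_S : forall y, tlN (S y) = nsnd y. Proof. reflexivity. Qed.
Lemma den_consE' : forall a b x, den (consE a b) x = S (npair (den a x) (den b x)).
Proof. intros. rewrite den_consE. reflexivity. Qed.
Global Hint Rewrite den_hdE den_tlE den_consE' den_nthE hdN_S tlN_S : dn.

Ltac unf := unfold step, stepE, evalpart, retpart, Cx, KK, Px, Lx, Tx, Ax, evE, retE, hdX, tlX, nthX, revX,
  decE, succE, eqE, fCompE, fPrecE, fMuE, Vx, FR, K', FT, FA, cEv, cRet, fComp, fPrec, fMu, ncons.
Ltac stp := unf; unf; unf; unf; repeat (autorewrite with dn; simpl).

Lemma step_zero : forall l K, step (npair (cEv (npair 0 0) l) K) = npair (cRet 0) K.
Proof. intros. stp. reflexivity. Qed.
Lemma step_succ : forall l K, step (npair (cEv (npair 1 0) (encl l)) K) = npair (cRet (S (hd 0 l))) K.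
Proof. intros. stp. rewrite hdN_encl. rewrite Nat.add_1_r. reflexivity. Qed.
Lemma step_proj : forall i l K, step (npair (cEv (npair 2 i) (encl l)) K) = npair (cRet (nth i l 0)) K.
Proof. intros. stp. reflexivity. Qed.
Lemma step_comp_nil : forall f l K, step (npair (cEv (npair 3 (npair f 0)) l) K) = npair (cEv f 0) K.
Proof. intros. stp. reflexivity. Qed.
Lemma step_comp_cons : forall f g r l K, step (npair (cEv (npair 3 (npair f (ncons g r))) l) K) =
  npair (cEv g l) (ncons (fComp f r l 0) K).
Proof. intros. stp. reflexivity. Qed.
Lemma step_prec : forall f g n l K, step (npair (cEv (npair 4 (npair f g)) (ncons n l)) K) =
  npair (cEv f l) (ncons (fPrec g 0 n l) K).
Proof. intros. stp. reflexivity. Qed.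
Lemma step_mu : forall f l K, step (npair (cEv (npair 5 f) l) K) =
  npair (cEv f (ncons 0 l)) (ncons (fMu f 0 l) K).
Proof. intros. stp. reflexivity. Qed.
Lemma ret_comp_nil : forall v f l a K, step (npair (cRet v) (ncons (fComp f 0 l (encl a)) K)) =
  npair (cEv f (encl (rev (v :: a)))) K.
Proof. intros. stp. change (S (npair v (encl a))) with (encl (v :: a)). rewrite den_revE. reflexivity. Qed.
Lemma ret_comp_cons : forall v f g r l a K, step (npair (cRet v) (ncons (fComp f (ncons g r) l a) K)) =
  npair (cEv g l) (ncons (fComp f r l (ncons v a)) K).
Proof. intros. stp. reflexivity. Qed.
Lemma ret_prec_eq : forall v g n l K, step (npair (cRet v) (ncons (fPrec g n n l) K)) = npair (cRet v) K.
Proof. intros. stp. rewrite Nat.sub_diag. simpl. reflexivity. Qed.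
Lemma ret_prec_ne : forall v g i n l K, i <> n -> step (npair (cRet v) (ncons (fPrec g i n l) K)) =
  npair (cEv g (ncons i (ncons v l))) (ncons (fPrec g (S i) n l) K).
Proof. intros. stp. destruct (i - n + (n - i)) eqn:E. lia. rewrite Nat.add_1_r. reflexivity. Qed.
Lemma ret_mu_0 : forall f i l K, step (npair (cRet 0) (ncons (fMu f i l) K)) = npair (cRet i) K.
Proof. intros. stp. reflexivity. Qed.
Lemma ret_mu_S : forall w f i l K, step (npair (cRet (S w)) (ncons (fMu f i l) K)) =
  npair (cEv f (ncons (S i) l)) (ncons (fMu f (S i) l) K).
Proof. intros. stp. rewrite Nat.add_1_r. reflexivity. Qed.
Lemma step_halt : forall v, step (npair (cRet v) 0) = npair (cRet v) 0.
Proof. intros. stp. reflexivity. Qed.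

Definition reach x y := exists s, Nat.iter s step x = y.
Lemma reach_refl : forall x, reach x x.
Proof. intros; exists 0; reflexivity. Qed.
Lemma reach_trans : forall x y z, reach x y -> reach y z -> reach x z.
Proof. intros x y z [a Ha] [b Hb]. exists (b + a). rewrite Nat.iter_add. congruence. Qed.
Lemma reach_step : forall x y, reach (step x) y -> reach x y.
Proof. intros x y [a Ha]. exists (S a). rewrite Nat.iter_succ_r. auto. Qed.

Definition st c K := npair c K.

Definition Pc p l v :=
  (forall K, reach (npair (cEv (code p) (encl l)) K) (npair (cRet v) K)) /\
  (forall f g n l', p = RPrec f g -> l = n :: l' -> forall N K, n <= N ->
     reach (npair (cEv (code f) (encl l')) (ncons (fPrec (code g) 0 N (encl l')) K))
           (npair (cRet v) (ncons (fPrec (code g) n N (encl l')) K))).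
Definition Qc gs l vs :=
  (gs = [] -> vs = []) /\
  (forall f a K g r, gs = g :: r ->
     reach (npair (cEv (code g) (encl l)) (ncons (fComp f (encl (map code r)) (encl l) (encl a)) K))
           (npair (cEv f (encl (rev a ++ vs))) K)).

Lemma complete : forall p l v, eval p l v -> Pc p l v.
Proof.
  apply (eval_strong Pc Qc).
  - intros l; split; [|intros; discriminate].
    intros K. apply reach_step. simpl code. rewrite step_zero. apply reach_refl.
  - intros l; split; [|intros; discriminate].
    intros K. apply reach_step. simpl code. rewrite step_succ. apply reach_refl.
  - intros i l; split; [|intros; discriminate].
    intros K. apply reach_step. simpl code. rewrite step_proj. apply reach_refl.
  - intros f gs l vs v _ [Hq1 Hq2] _ [Hp _]; split; [|intros; discriminate].
    intros K. simpl code. destruct gs as [|g r].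
    + assert (vs = []) by auto; subst. apply reach_step. simpl encl. rewrite step_comp_nil. apply (Hp K).
    + apply reach_step. simpl map. simpl encl. rewrite step_comp_cons.
      eapply reach_trans. apply (Hq2 (code f) [] K g r eq_refl). simpl. apply Hp.
  - intros f g l v _ [Hp _]; split.
    + intros K. apply reach_step. simpl code. simpl encl. rewrite step_prec.
      eapply reach_trans. apply Hp. apply reach_step. rewrite ret_prec_eq. apply reach_refl.
    + intros f' g' n l' E1 E2 N K _. injection E1; injection E2; intros; subst. apply Hp.
  - intros f g n l z v _ [_ H1] _ [H2 _]; split.
    + intros K. apply reach_step. simpl code. simpl encl. rewrite step_prec.
      eapply reach_trans. apply (H1 f g n l eq_refl eq_refl (S n) K). lia.
      apply reach_step. rewrite ret_prec_ne by lia.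
      eapply reach_trans. apply (H2 _). apply reach_step. rewrite ret_prec_eq. apply reach_refl.
    + intros f' g' n' l' E1 E2 N K HN. injection E1; injection E2; intros; subst.
      eapply reach_trans. apply (H1 f' g' n l' eq_refl eq_refl N K). lia.
      apply reach_step. rewrite ret_prec_ne by lia. apply (H2 _).
  - intros f l n _ [H0 _] Hlt; split; [|intros; discriminate].
    intros K. apply reach_step. simpl code. rewrite step_mu.
    assert (forall m, m <= n -> reach (npair (cEv (code f) (ncons 0 (encl l))) (ncons (fMu (code f) 0 (encl l)) K))
                                 (npair (cEv (code f) (encl (m :: l))) (ncons (fMu (code f) m (encl l)) K))).
    { induction m; intros Hm. apply reach_refl.
      eapply reach_trans. apply IHm; lia.
      destruct (Hlt m ltac:(lia)) as [k [_ [Hk _]]].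
      eapply reach_trans. apply Hk. apply reach_step. rewrite ret_mu_S. apply reach_refl. }
    eapply reach_trans. apply (H n (le_n n)). eapply reach_trans. apply H0.
    apply reach_step. rewrite ret_mu_0. apply reach_refl.
  - intros l; split; auto. intros; discriminate.
  - intros g gs l v vs _ [Hp _] _ [Hq1 Hq2]; split. intros; discriminate.
    intros f a K g' r E. injection E; intros; subst.
    eapply reach_trans. apply Hp. destruct r as [|g2 r2].
    + assert (vs = []) by auto; subst. apply reach_step. simpl encl. rewrite ret_comp_nil. simpl. apply reach_refl.
    + apply reach_step. simpl map. simpl encl. rewrite ret_comp_cons.
      change (ncons v (encl a)) with (encl (v :: a)).
      eapply reach_trans. apply (Hq2 f (v :: a) K g2 r2 eq_refl). simpl. rewrite <- app_assoc. apply reach_refl.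
Qed.

Definition init e i := npair (cEv e (encl [i])) 0.
Definition Phi e i a := exists s, Nat.iter s step (init e i) = npair (cRet a) 0.

Lemma iter_halt : forall s a, Nat.iter s step (npair (cRet a) 0) = npair (cRet a) 0.
Proof. induction s; intros; simpl; auto. rewrite IHs. apply step_halt. Qed.

Lemma Phi_after : forall e i a s t, Nat.iter s step (init e i) = npair (cRet a) 0 -> s <= t ->
  Nat.iter t step (init e i) = npair (cRet a) 0.
Proof.
  intros. replace t with ((t - s) + s) by lia. rewrite Nat.iter_add, H. apply iter_halt.
Qed.

Lemma cRet_inj : forall a b, npair (cRet a) 0 = npair (cRet b) 0 -> a = b.
Proof.
  intros a b H. apply (f_equal nfst) in H. rewrite !nfst_pair in H. unfold cRet in H.
  apply (f_equal nsnd) in H. rewrite !nsnd_pair in H. auto.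
Qed.

Lemma Phi_det : forall e i a b, Phi e i a -> Phi e i b -> a = b.
Proof.
  intros e i a b [s Hs] [t Ht]. apply cRet_inj.
  rewrite <- (Phi_after _ _ _ _ (s + t) Hs) by lia. apply (Phi_after _ _ _ _ _ Ht). lia.
Qed.

Lemma Phi_complete : forall q i v, eval q [i] v -> Phi (code q) i v.
Proof.
  intros q i v H. destruct (complete q [i] v H) as [H1 _]. apply (H1 0).
Qed.

Definition runE := EPrec (EFst EIn) (ESnd EIn) (EComp stepE (EFst (ESnd EIn))).
Lemma den_runE : forall s x, den runE (npair s x) = Nat.iter s step x.
Proof.
  intros. unfold runE. rewrite (den_prec_iter _ _ _ _ step).
  - rewrite den_fst, den_snd, den_in, nfst_pair, nsnd_pair. auto.
  - intros. rewrite den_comp, den_fst, den_snd, den_in, nsnd_pair, nfst_pair. reflexivity.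
Qed.

Definition initE e i := EPair (EPair (EConst 0) (EPair e (consE i (EConst 0)))) (EConst 0).
Lemma den_initE : forall e i x, den (initE e i) x = init (den e x) (den i x).
Proof. intros. unfold initE. rewrite !den_pair, den_consE, !den_const. reflexivity. Qed.

Definition haltE X := EAdd (EAdd (ESub (EFst (EFst X)) (EConst 1)) (ESub (EConst 1) (EFst (EFst X)))) (ESnd X).
Definition outE X := ESnd (EFst X).
Lemma halt_char : forall x, (nfst (nfst x) - 1) + (1 - nfst (nfst x)) + nsnd x = 0 ->
  x = npair (cRet (nsnd (nfst x))) 0.
Proof.
  intros x H. rewrite <- (pair_surj x) at 1. unfold cRet. f_equal; [|lia].
  rewrite <- (pair_surj (nfst x)) at 1. f_equal. lia.
Qed.

Lemma bounded_dec : forall P : nat -> Prop, (forall n, P n \/ ~ P n) ->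
  forall k, (exists j, j <= k /\ P j) \/ ~ (exists j, j <= k /\ P j).
Proof.
  intros P dec k. induction k.
  - destruct (dec 0). left; exists 0; auto. right; intros [j [Hj Pj]]. replace j with 0 in * by lia. auto.
  - destruct IHk as [[j [Hj Pj]]|Hno]. left; exists j; split; auto.
    destruct (dec (S k)). left; exists (S k); auto.
    right; intros [j [Hj Pj]]. destruct (Nat.eq_dec j (S k)). subst; auto. apply Hno; exists j; split; auto; lia.
Qed.

Lemma least_ex : forall P : nat -> Prop, (forall n, P n \/ ~ P n) -> (exists n, P n) ->
  exists n, P n /\ forall m, m < n -> ~ P m.
Proof.
  intros P dec [n Hn].
  assert (forall k, (exists j, j <= k /\ P j) -> exists n, P n /\ forall m, m < n -> ~ P m) as Hk.
  { induction k; intros [j [Hj Pj]].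
    - exists j. split; auto. intros; lia.
    - destruct (bounded_dec P dec k) as [Hex|Hno]. apply IHk; auto.
      exists j. split; auto. intros m Hm Pm. apply Hno. exists m; split; auto. lia. }
  apply (Hk n). exists n; split; auto.
Qed.


Definition runX e inpE := EComp runE (EPair (EFst EIn) (initE (EConst e) (EComp inpE (ESnd EIn)))).
Lemma den_runX : forall e inpE s k, den (runX e inpE) (npair s k) = Nat.iter s step (init e (den inpE k)).
Proof.
  intros. unfold runX. rewrite den_comp, den_pair, den_initE, den_fst, den_in, den_const, den_comp,
    den_snd, den_in, nfst_pair, nsnd_pair. apply den_runE.
Qed.

Lemma Phi_computable : forall e (inpE : exp), (forall k, exists a, Phi e (den inpE k) a) ->
  exists f, computable f /\ forall k, Phi e (den inpE k) (f k).
Proof.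
  intros e inpE Hex.
  set (TE := haltE (runX e inpE)).
  set (OE := outE (runX e inpE)).
  set (Tprog := ap1 (compile TE) (ap2 npairR (RProj 0) (RProj 1))).
  set (prog := ap1 (compile OE) (ap2 npairR (RMu Tprog) (RProj 0))).
  assert (HT : forall s k, eval Tprog [s; k] (den TE (npair s k))).
  { intros. eapply ap1_ok. eapply ap2_ok. apply proj_ok; reflexivity. apply proj_ok; reflexivity.
    apply npairR_ok. apply compile_ok1. }
  assert (forall k, exists a, eval prog [k] a /\ Phi e (den inpE k) a) as Hall.
  { intros k. destruct (Hex k) as [a [s0 Hs0]].
    destruct (least_ex (fun s => den TE (npair s k) = 0)) as [s [Hs Hmin]].
    - intros n. destruct (den TE (npair n k)); auto.
    - exists s0. unfold TE, haltE. rewrite !den_add, !den_sub, !den_fst, !den_snd, !den_const, den_runX, Hs0.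
      unfold cRet. rewrite !nfst_pair, !nsnd_pair. reflexivity.
    - exists (den OE (npair s k)). split.
      + eapply ap1_ok. eapply ap2_ok. apply ev_mu.
        * rewrite <- Hs. apply HT.
        * intros m Hm. specialize (Hmin m Hm). destruct (den TE (npair m k)) eqn:E. contradiction.
          exists n. rewrite <- E. apply HT.
        * apply proj_ok; reflexivity.
        * apply npairR_ok.
        * apply compile_ok1.
      + exists s. unfold TE, haltE in Hs. rewrite !den_add, !den_sub, !den_fst, !den_snd, !den_const, den_runX in Hs.
        apply halt_char in Hs. rewrite Hs at 1. unfold OE, outE. rewrite den_snd, den_fst, den_runX. reflexivity. }
  exists (fun k => proj1_sig (constructive_indefinite_description _ (Hall k))). split.
  - exists prog. intros n. exact (proj1 (proj2_sig (constructive_indefinite_description _ (Hall n)))).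
  - intros k. exact (proj2 (proj2_sig (constructive_indefinite_description _ (Hall k)))).
Qed.

Lemma den_prec_rec : forall n b s x (F : nat -> nat), F 0 = den b x ->
  (forall i, F (S i) = den s (npair i (npair (F i) x))) -> den (EPrec n b s) x = F (den n x).
Proof.
  intros n b s x F H0 HS.
  transitivity (nat_rect (fun _ => nat) (den b x) (fun i r => den s (npair i (npair r x))) (den n x)); [reflexivity|].
  generalize (den n x) as k. induction k; cbn [nat_rect]; auto.
  rewrite HS, IHk. auto.
Qed.

Definition hstep r := npair (nfst r + nsnd r) (1 - nsnd r).
Definition hs k := Nat.iter k hstep (npair 0 0).
Lemma hs_spec : forall k, 2 * nfst (hs k) + nsnd (hs k) = k /\ nsnd (hs k) <= 1.
Proof.
  induction k. unfold hs; simpl; rewrite ?nfst_pair, ?nsnd_pair; lia.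
  unfold hs in *. rewrite Nat.iter_succ. unfold hstep. rewrite ?nfst_pair, ?nsnd_pair. fold hstep. lia.
Qed.
Definition halfN a := nfst (hs a).
Definition parN a := nsnd (hs a).
Lemma half_double : forall q b, b <= 1 -> halfN (2 * q + b) = q /\ parN (2 * q + b) = b.
Proof.
  intros q b Hb. unfold halfN, parN. destruct (hs_spec (2 * q + b)). lia.
Qed.

Definition hstepE := EPair (EAdd (EFst EIn) (ESnd EIn)) (ESub (EConst 1) (ESnd EIn)).
Definition hsE := EPrec EIn (EPair (EConst 0) (EConst 0)) (EComp hstepE (EFst (ESnd EIn))).
Lemma den_hsE : forall a, den hsE a = hs a.
Proof.
  intros. unfold hsE. rewrite (den_prec_iter _ _ _ _ hstep). reflexivity.
  intros. unfold hstepE. autorewrite with dn. reflexivity.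
Qed.
Definition nbit i a := parN (Nat.iter i halfN a).
Definition bitE := EComp (ESnd hsE) (EPrec (EFst EIn) (ESnd EIn) (EComp (EFst hsE) (EFst (ESnd EIn)))).
Lemma den_bitE : forall i a, den bitE (npair i a) = nbit i a.
Proof.
  intros. unfold bitE. rewrite den_comp, den_snd, den_hsE.
  rewrite (den_prec_iter _ _ _ _ halfN). autorewrite with dn. reflexivity.
  intros. autorewrite with dn. rewrite den_hsE. reflexivity.
Qed.

Definition b2n (b : bool) := if b then 1 else 0.

Lemma bit_pc : forall m x i, i < m -> nbit i (prefix_code x m) = b2n (x i).
Proof.
  induction m; intros x i Hi. lia.
  assert (Hb : (if x 0 then 1 else 0) <= 1) by (destruct (x 0); auto).
  destruct (half_double (prefix_code (fun i => x (S i)) m) _ Hb) as [H1 H2]. change (prefix_code x (S m)) with (2 * prefix_code (fun i => x (S i)) m + (if x 0 then 1 else 0)) in *.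
  destruct i.
  - unfold nbit. change (Nat.iter 0 halfN ?a) with a. rewrite H2. destruct (x 0); reflexivity.
  - unfold nbit. rewrite Nat.iter_succ_r. rewrite H1. apply (IHm (fun i => x (S i))). lia.
Qed.

Fixpoint fzN a j := match j with 0 => 0 | S j' => if (fzN a j' =? j') && (nbit j' a =? 1) then S j' else fzN a j' end.
Lemma fz_spec : forall a j, fzN a j <= j /\ (forall i, i < fzN a j -> nbit i a = 1) /\
  (fzN a j < j -> nbit (fzN a j) a <> 1).
Proof.
  intros a j; induction j as [|j [IH1 [IH2 IH3]]]; simpl. repeat split; intros; lia.
  destruct (Nat.eqb_spec (fzN a j) j); destruct (Nat.eqb_spec (nbit j a) 1); simpl.
  - repeat split; try lia. intros i Hi. destruct (Nat.eq_dec i j). subst; auto. apply IH2; lia.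
  - repeat split; try lia; auto. intros _. congruence.
  - repeat split; try lia; auto.
  - repeat split; try lia; auto.
Qed.
Lemma fz_char : forall a j c, c <= j -> (forall i, i < c -> nbit i a = 1) -> (c < j -> nbit c a <> 1) -> fzN a j = c.
Proof.
  intros a j; induction j; intros c H1 H2 H3; simpl. lia.
  destruct (Nat.eq_dec c (S j)).
  - subst. rewrite (IHj j); auto. rewrite Nat.eqb_refl, H2 by lia. reflexivity. lia.
  - assert (fzN a j = c) as ->. { apply IHj; [lia|auto|intros; apply H3; lia]. }
    destruct (Nat.eqb_spec c j); simpl; auto. subst. destruct (Nat.eqb_spec (nbit j a) 1); simpl; auto.
    exfalso; apply H3; auto; lia.
Qed.

Definition fzE := EPrec (ESnd EIn) (EConst 0)
  (EIfz (EAdd (eqE (EFst (ESnd EIn)) (EFst EIn))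
              (eqE (EComp bitE (EPair (EFst EIn) (EFst (ESnd (ESnd EIn))))) (EConst 1)))
        (succE (EFst EIn)) (EFst (ESnd EIn))).
Lemma den_fzE : forall a m, den fzE (npair a m) = fzN a m.
Proof.
  intros. unfold fzE. rewrite (den_prec_rec _ _ _ _ (fzN a)).
  - rewrite den_snd, den_in, nsnd_pair. auto.
  - reflexivity.
  - intros i. unfold eqE, succE. autorewrite with dn. rewrite den_bitE. simpl fzN.
    match goal with |- context [match ?X with 0 => _ | S _ => _ end] => destruct X eqn:E end;
    destruct (Nat.eqb_spec (fzN a i) i); destruct (Nat.eqb_spec (nbit i a) 1); simpl; lia.
Qed.

Definition decodes (u : cantor) c := u c = false /\ forall i, i < c -> u i = true.
Lemma decodes_uniq : forall u c c', decodes u c -> decodes u c' -> c = c'.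
Proof.
  intros u c c' [H1 H2] [H3 H4]. destruct (lt_eq_lt_dec c c') as [[|]|]; auto.
  rewrite H4 in H1 by auto; discriminate. rewrite H2 in H3 by auto; discriminate.
Qed.
Lemma fz_pc_dec : forall u m c, decodes u c -> c < m -> fzN (prefix_code u m) m = c.
Proof.
  intros u m c [H1 H2] Hc. apply fz_char; try lia.
  - intros i Hi. rewrite bit_pc by lia. rewrite H2; auto.
  - intros _. rewrite bit_pc by lia. rewrite H1. simpl. lia.
Qed.
Lemma fz_pc_dec' : forall u m, fzN (prefix_code u m) m < m -> decodes u (fzN (prefix_code u m) m).
Proof.
  intros u m H. destruct (fz_spec (prefix_code u m) m) as [H1 [H2 H3]]. split.
  - specialize (H3 H). rewrite bit_pc in H3 by lia. destruct (u _); simpl in *; auto. lia.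
  - intros i Hi. specialize (H2 i Hi). rewrite bit_pc in H2 by lia. destruct (u i); simpl in *; auto. lia.
Qed.

Definition ltN a b := S a - b.
Definition eqN a b := (a - b) + (b - a).
Definition neqN a b := match eqN a b with 0 => 1 | S _ => 0 end.
Definition haltN X := (nfst (nfst X) - 1) + (1 - nfst (nfst X)) + nsnd X.
Definition outN X := nsnd (nfst X).

Definition checkH n m H O c :=
  let e := nfst c in let e' := nfst (nsnd c) in let d := nfst (nsnd (nsnd c)) in
  let inp := npair c (npair (nbit d O) n) in
  let X1 := Nat.iter m step (init e inp) in
  let X2 := Nat.iter m step (init e' inp) in
  ltN d m + ltN n m + haltN X1 + ltN (outN X1) m + eqN (nbit n O) (nbit (outN X1) H)
  + haltN X2 + ltN (outN X2) m + eqN (nbit n H) (nbit (outN X2) O).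

Definition checkN n m A B :=
  let c1 := fzN A m in let c2 := fzN B m in
  ltN c1 m + ltN c2 m + neqN c1 c2 +
  match ltN c2 c1 with 0 => checkH n m A B c1 | S _ => checkH n m B A c2 end.

Definition ltM a b := ESub (EAdd (EConst 1) a) b.
Definition eqM a b := EAdd (ESub a b) (ESub b a).
Definition bitM i a := EComp bitE (EPair i a).
Definition runM s x := EComp runE (EPair s x).
Definition haltM X := EAdd (EAdd (ESub (EFst (EFst X)) (EConst 1)) (ESub (EConst 1) (EFst (EFst X)))) (ESnd X).
Definition outM X := ESnd (EFst X).
Definition fzM a m := EComp fzE (EPair a m).

Definition checkHE n m H O c :=
  let inp := EPair c (EPair (bitM (EFst (ESnd (ESnd c))) O) n) in
  let X1 := runM m (initE (EFst c) inp) in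
  let X2 := runM m (initE (EFst (ESnd c)) inp) in
  EAdd (EAdd (EAdd (EAdd (EAdd (EAdd (EAdd (ltM (EFst (ESnd (ESnd c))) m) (ltM n m)) (haltM X1))
    (ltM (outM X1) m)) (eqM (bitM n O) (bitM (outM X1) H)))
    (haltM X2)) (ltM (outM X2) m)) (eqM (bitM n H) (bitM (outM X2) O)).

Lemma den_checkHE : forall n m H O c y,
  den (checkHE n m H O c) y = checkH (den n y) (den m y) (den H y) (den O y) (den c y).
Proof.
  intros. unfold checkHE, ltM, eqM, bitM, runM, haltM, outM.
  autorewrite with dn. rewrite !den_bitE, !den_initE, !den_runE. autorewrite with dn.
  rewrite !den_bitE. reflexivity.
Qed.

Opaque checkHE fzE bitE runE.
Definition nE := EFst EIn.
Definition mE := EFst (ESnd EIn).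
Definition AE := EFst (ESnd (ESnd EIn)).
Definition BE := ESnd (ESnd (ESnd EIn)).
Definition PE :=
  EAdd (EAdd (EAdd (ltM (fzM AE mE) mE) (ltM (fzM BE mE) mE))
             (EIfz (eqM (fzM AE mE) (fzM BE mE)) (EConst 1) (EConst 0)))
       (EIfz (ltM (fzM BE mE) (fzM AE mE)) (checkHE nE mE AE BE (fzM AE mE)) (checkHE nE mE BE AE (fzM BE mE))).

Lemma den_PE : forall n m A B, den PE (npair n (npair m (npair A B))) = checkN n m A B.
Proof.
  intros. unfold PE, ltM, eqM, fzM, nE, mE, AE, BE.
  autorewrite with dn. rewrite !den_checkHE. autorewrite with dn. rewrite !den_fzE. reflexivity.
Qed.

Definition hinp (o : cantor) c k := npair c (npair (b2n (o (nfst (nsnd (nsnd c))))) k).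
Definition Hub (h o : cantor) c := forall k,
  (exists a, Phi (nfst c) (hinp o c k) a /\ o k = h a) /\
  (exists a, Phi (nfst (nsnd c)) (hinp o c k) a /\ h k = o a).
Definition Gr (u v : cantor) := exists c1 c2, decodes u c1 /\ decodes v c2 /\
  ((c2 < c1 /\ Hub u v c1) \/ (c1 < c2 /\ Hub v u c2)).

Lemma b2n_inj : forall a b, b2n a = b2n b -> a = b.
Proof. intros [] []; simpl; congruence. Qed.

Lemma checkH_sound : forall n m (h o : cantor) c, checkH n m (prefix_code h m) (prefix_code o m) c = 0 ->
  (exists a, Phi (nfst c) (hinp o c n) a /\ o n = h a) /\
  (exists a, Phi (nfst (nsnd c)) (hinp o c n) a /\ h n = o a).
Proof.
  intros n m h o c Hc. unfold checkH in Hc. cbv zeta in Hc.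
  unfold ltN, eqN, haltN, outN in Hc.
  assert (Hd : nfst (nsnd (nsnd c)) < m) by lia.
  assert (Hn : n < m) by lia.
  rewrite (bit_pc m o _ Hd) in Hc. fold (hinp o c n) in Hc.
  set (X1 := Nat.iter m step (init (nfst c) (hinp o c n))) in *.
  set (X2 := Nat.iter m step (init (nfst (nsnd c)) (hinp o c n))) in *.
  assert (H1 : X1 = npair (cRet (nsnd (nfst X1))) 0) by (apply halt_char; lia).
  assert (H2 : X2 = npair (cRet (nsnd (nfst X2))) 0) by (apply halt_char; lia).
  assert (Ha1 : nsnd (nfst X1) < m) by lia.
  assert (Ha2 : nsnd (nfst X2) < m) by lia.
  assert (E1 : nbit n (prefix_code o m) = nbit (nsnd (nfst X1)) (prefix_code h m)) by lia.
  assert (E2 : nbit n (prefix_code h m) = nbit (nsnd (nfst X2)) (prefix_code o m)) by lia.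
  rewrite !bit_pc in E1, E2 by auto. split.
  - exists (nsnd (nfst X1)). split. exists m. exact H1. apply b2n_inj; auto.
  - exists (nsnd (nfst X2)). split. exists m. exact H2. apply b2n_inj; auto.
Qed.

Lemma checkH_complete : forall n (h o : cantor) c,
  (exists a, Phi (nfst c) (hinp o c n) a /\ o n = h a) ->
  (exists a, Phi (nfst (nsnd c)) (hinp o c n) a /\ h n = o a) ->
  exists m0, forall m, m0 <= m -> checkH n m (prefix_code h m) (prefix_code o m) c = 0.
Proof.
  intros n h o c [a1 [[s1 Hs1] E1]] [a2 [[s2 Hs2] E2]].
  exists (S (nfst (nsnd (nsnd c)) + n + a1 + a2 + s1 + s2)). intros m Hm.
  unfold checkH. cbv zeta. rewrite (bit_pc m o) by lia. fold (hinp o c n).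
  rewrite (Phi_after _ _ _ s1 m Hs1) by lia. rewrite (Phi_after _ _ _ s2 m Hs2) by lia.
  unfold ltN, eqN, haltN, outN, cRet. rewrite !nfst_pair, !nsnd_pair.
  rewrite !bit_pc by lia. rewrite E1, E2. lia.
Qed.

Lemma neqN_0 : forall a b, a <> b -> neqN a b = 0.
Proof. intros. unfold neqN, eqN. destruct (a - b + (b - a)) eqn:E; lia. Qed.
Lemma neqN_ne : forall a b, neqN a b = 0 -> a <> b.
Proof. intros a b H E. subst. unfold neqN, eqN in H. rewrite Nat.sub_diag in H. discriminate. Qed.

Lemma fz_at : forall u m c, decodes u c -> ltN (fzN (prefix_code u m) m) m = 0 -> fzN (prefix_code u m) m = c.
Proof.
  intros u m c Hd Hl. unfold ltN in Hl. assert (Hl2 : fzN (prefix_code u m) m < m) by lia.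
  apply fz_pc_dec' in Hl2. apply (decodes_uniq u); auto.
Qed.

Lemma Gr_pi2 : forall u v, Gr u v <-> forall n, exists m, checkN n m (prefix_code u m) (prefix_code v m) = 0.
Proof.
  intros u v; split.
  - intros [c1 [c2 [du [dv [[Hlt Hh]|[Hlt Hh]]]]]] n; destruct (Hh n) as [Ha Hb].
    + destruct (checkH_complete n u v c1 Ha Hb) as [m0 Hm0].
      exists (m0 + c1 + c2 + 1). unfold checkN. cbv zeta.
      rewrite (fz_pc_dec u _ c1), (fz_pc_dec v _ c2) by (auto; lia).
      replace (ltN c2 c1) with 0 by (unfold ltN; lia). rewrite Hm0 by lia.
      rewrite neqN_0 by lia. unfold ltN. lia.
    + destruct (checkH_complete n v u c2 Ha Hb) as [m0 Hm0].
      exists (m0 + c1 + c2 + 1). unfold checkN. cbv zeta.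
      rewrite (fz_pc_dec u _ c1), (fz_pc_dec v _ c2) by (auto; lia).
      unfold ltN at 3. destruct (S c2 - c1) eqn:E. lia. rewrite Hm0 by lia.
      rewrite neqN_0 by lia. unfold ltN. lia.
  - intros H. destruct (H 0) as [m0 Hm0]. unfold checkN in Hm0. cbv zeta in Hm0.
    set (c1 := fzN (prefix_code u m0) m0) in *. set (c2 := fzN (prefix_code v m0) m0) in *.
    assert (du : decodes u c1) by (apply fz_pc_dec'; unfold ltN in Hm0; lia).
    assert (dv : decodes v c2) by (apply fz_pc_dec'; unfold ltN in Hm0; lia).
    assert (Hne : c1 <> c2) by (apply neqN_ne; lia).
    exists c1, c2. split; auto. split; auto.
    destruct (lt_eq_lt_dec c1 c2) as [[Hl|Hl]|Hl]; [right|contradiction|left]; split; auto; intros k;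
      destruct (H k) as [m Hm]; unfold checkN in Hm; cbv zeta in Hm;
      rewrite (fz_at u m c1), (fz_at v m c2) in Hm by (auto; lia).
    + unfold ltN at 3 in Hm. destruct (S c2 - c1) eqn:E. lia. apply (checkH_sound k m). lia.
    + replace (ltN c2 c1) with 0 in Hm by (unfold ltN; lia). apply (checkH_sound k m). lia.
Qed.

Definition pprog := RComp (compile PE)
  [ap2 npairR (RProj 0) (ap2 npairR (RProj 1) (ap2 npairR (RProj 2) (RProj 3)))].
Lemma pprog_ok : forall n m a b, eval pprog [n; m; a; b] (checkN n m a b).
Proof.
  intros. rewrite <- den_PE. eapply ev_comp. apply evs_cons; [|apply evs_nil].
  - eapply ap2_ok. apply proj_ok; reflexivity.
    eapply ap2_ok. apply proj_ok; reflexivity.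
    eapply ap2_ok. apply proj_ok; reflexivity. apply proj_ok; reflexivity.
    apply npairR_ok. apply npairR_ok. apply npairR_ok.
  - apply compile_ok1.
Qed.

Lemma Gr_pi02 : pi02_2 Gr.
Proof.
  exists pprog. split.
  - intros. eexists. apply pprog_ok.
  - intros u v. rewrite Gr_pi2. split; intros H n; destruct (H n) as [m Hm]; exists m.
    + rewrite <- Hm. apply pprog_ok.
    + eapply eval_det. apply pprog_ok. auto.
Qed.

Lemma Gr_simple : simple_graph Gr.
Proof.
  split.
  - intros u v [c1 [c2 [d1 [d2 [[H1 H2]|[H1 H2]]]]]]; exists c2, c1; split; auto; split; auto.
  - intros u [c1 [c2 [d1 [d2 H]]]]. rewrite (decodes_uniq u c1 c2) in H by auto.
    destruct H as [[H _]|[H _]]; lia.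
Qed.

Lemma meq_refl : forall x, meq x x.
Proof. intros; split; exists (fun n => n); split; auto; exists (RProj 0); intros; apply ev_proj. Qed.
Lemma mred_trans : forall x y z, mred x y -> mred y z -> mred x z.
Proof.
  intros x y z [f [[p Hp] Hf]] [g [[q Hq] Hg]]. exists (fun n => g (f n)). split.
  - exists (ap1 q p). intros. eapply ap1_ok; eauto.
  - intros. rewrite Hf, Hg. auto.
Qed.
Lemma meq_trans : forall x y z, meq x y -> meq y z -> meq x z.
Proof. intros x y z [H1 H2] [H3 H4]; split; eapply mred_trans; eauto. Qed.
Lemma meq_sym : forall x y, meq x y -> meq y x.
Proof. intros x y [H1 H2]; split; auto. Qed.

Lemma Hub_mred1 : forall h o c, Hub h o c -> mred o h.
Proof.
  intros h o c Hh.
  destruct (Phi_computable (nfst c) (EPair (EConst c) (EPair (EConst (b2n (o (nfst (nsnd (nsnd c)))))) EIn)))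
    as [f [Hf Hphi]].
  - intros k. destruct (Hh k) as [[a [Ha _]] _]. exists a. exact Ha.
  - exists f. split; auto. intros k. destruct (Hh k) as [[a [Ha E]] _]. rewrite E. f_equal.
    eapply Phi_det. exact Ha. apply (Hphi k).
Qed.
Lemma Hub_mred2 : forall h o c, Hub h o c -> mred h o.
Proof.
  intros h o c Hh.
  destruct (Phi_computable (nfst (nsnd c)) (EPair (EConst c) (EPair (EConst (b2n (o (nfst (nsnd (nsnd c)))))) EIn)))
    as [f [Hf Hphi]].
  - intros k. destruct (Hh k) as [_ [a [Ha _]]]. exists a. exact Ha.
  - exists f. split; auto. intros k. destruct (Hh k) as [_ [a [Ha E]]]. rewrite E. f_equal.
    eapply Phi_det. exact Ha. apply (Hphi k).
Qed.

Lemma Gr_meq : forall u v, Gr u v -> meq u v.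
Proof.
  intros u v [c1 [c2 [_ [_ [[_ H]|[_ H]]]]]].
  - split. eapply Hub_mred2; eauto. eapply Hub_mred1; eauto.
  - split. eapply Hub_mred1; eauto. eapply Hub_mred2; eauto.
Qed.

Lemma walk_meq : forall k x y, walk Gr k x y -> meq x y.
Proof.
  induction k; simpl; intros x y H. subst; apply meq_refl.
  destruct H as [z [H1 H2]]. eapply meq_trans. apply Gr_meq; eauto. auto.
Qed.

Lemma exists_val : forall (x : cantor) b, (forall i, x i = negb b -> False) -> forall i, x i = b.
Proof. intros x b H i. destruct (x i) eqn:E, b; auto; exfalso; apply (H i); auto. Qed.

Lemma has_val : forall (x y : cantor) f d b, (forall n, y n = x (f n)) -> x d <> y d ->
  exists i, x i = b.
Proof.
  intros x y f d b Hf Hd. apply NNPP. intros Hno.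
  assert (forall i, x i = negb b) as Hall.
  { intros i. destruct (x i) eqn:E, b; auto; exfalso; apply Hno; exists i; auto. }
  apply Hd. rewrite Hf, !Hall. auto.
Qed.

Lemma has_decode : forall x : cantor, (exists i, x i = false) -> exists c, decodes x c.
Proof.
  intros x Hex. assert (Hdec : forall n, x n = false \/ x n <> false) by (intros n; destruct (x n); [right; discriminate|left; reflexivity]).
  destruct (least_ex (fun i => x i = false) Hdec Hex) as [c [Hc Hmin]].
  exists c. split; auto. intros i Hi. specialize (Hmin i Hi). destruct (x i); auto.
Qed.

Lemma two_step_prog : forall (q : recf) (r : nat -> nat) E1 E2,
  (forall n, eval q [n] (r n)) ->
  forall x, eval (RComp (compile E2) [ap2 npairR (RProj 0) (ap1 q (compile E1))]) [x]
                 (den E2 (npair x (r (den E1 x)))).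
Proof.
  intros. eapply ev_comp. apply evs_cons; [|apply evs_nil].
  eapply ap2_ok. apply proj_ok; reflexivity. eapply ap1_ok. apply compile_ok1. apply H.
  apply npairR_ok. apply compile_ok1.
Qed.

Lemma ltM_den : forall a b y, den (ltM a b) y = S (den a y) - den b y.
Proof. reflexivity. Qed.
Lemma eqM_den : forall a b y, den (eqM a b) y = (den a y - den b y) + (den b y - den a y).
Proof. reflexivity. Qed.

Lemma meq_walk2 : forall x y, meq x y -> (exists d, x d <> y d) -> walk Gr 2 x y.
Proof.
  intros x y [[f1 [[q1 Hq1] E1]] [f2 [[q2 Hq2] E2]]] [d Hd].
  destruct (has_val x y f2 d true E2 Hd) as [p1 Hp1].
  destruct (has_val x y f2 d false E2 Hd) as [p0 Hp0].
  destruct (has_decode x) as [cx Hcx]. exists p0; auto.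
  destruct (has_decode y) as [cy Hcy].
  { destruct (has_val y x f1 d false E1 (fun H => Hd (eq_sym H))) as [i Hi]. exists i; auto. }
  set (bx := b2n (x d)).
  set (E1e := ESnd (ESnd EIn)).
  set (E2e := EIfz (eqM (EFst (ESnd (EFst EIn))) (EConst bx))
                (EAdd (EAdd (ESnd (ESnd (EFst EIn))) (EFst (EFst EIn))) (EConst 1))
                (EAdd (EAdd (ESnd EIn) (EFst (EFst EIn))) (EConst 1))).
  set (qF := RComp (compile E2e) [ap2 npairR (RProj 0) (ap1 q2 (compile E1e))]).
  set (gE := EIfz (ltM (ESnd (ESnd EIn)) (EFst EIn)) (EConst p1)
               (EIfz (eqM (ESnd (ESnd EIn)) (EFst EIn)) (EConst p0)
                  (ESub (ESub (ESnd (ESnd EIn)) (EFst EIn)) (EConst 1)))).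
  set (E2e' := EIfz (eqM (EFst (ESnd (EFst EIn))) (EConst bx)) (EComp gE (EFst EIn)) (ESnd EIn)).
  set (qF' := RComp (compile E2e') [ap2 npairR (RProj 0) (ap1 q1 (compile gE))]).
  assert (HqF : forall inp, eval qF [inp] (den E2e (npair inp (f2 (den E1e inp))))).
  { intros. apply two_step_prog. auto. }
  assert (HqF' : forall inp, eval qF' [inp] (den E2e' (npair inp (f1 (den gE inp))))).
  { intros. apply two_step_prog. auto. }
  clearbody qF qF'.
  set (c := npair (code qF) (npair (code qF') (npair d (cx + cy + 1)))).
  assert (Hc : cx < c /\ cy < c).
  { unfold c. destruct (npair_ge (code qF) (npair (code qF') (npair d (cx + cy + 1)))).
    destruct (npair_ge (code qF') (npair d (cx + cy + 1))). destruct (npair_ge d (cx + cy + 1)). lia. }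
  assert (Hnc : nfst c = code qF /\ nfst (nsnd c) = code qF' /\ nfst (nsnd (nsnd c)) = d).
  { unfold c; rewrite !nsnd_pair, !nfst_pair; auto. }
  destruct Hnc as [Hc1 [Hc2 Hc3]]. clearbody c.
  set (z := fun i => if i <? c then true else if i =? c then false else x (i - c - 1)).
  assert (Hz : decodes z c).
  { split. unfold z. rewrite Nat.ltb_irrefl, Nat.eqb_refl. auto.
    intros i Hi. unfold z. apply Nat.ltb_lt in Hi. rewrite Hi. auto. }
  assert (HgE : forall b k, z k = x (den gE (npair c (npair b k)))).
  { intros b k. unfold gE. rewrite den_ifz, ltM_den. autorewrite with dn. rewrite eqM_den. autorewrite with dn.
    unfold z. destruct (Nat.ltb_spec k c).
    - replace (S k - c) with 0 by lia. auto.
    - destruct (S k - c) eqn:E. lia. destruct (Nat.eqb_spec k c).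
      + subst. rewrite Nat.sub_diag. simpl. auto.
      + destruct (k - c + (c - k)) eqn:E'. lia. f_equal. }
  assert (Hzx : forall k, z (k + c + 1) = x k).
  { intros k. unfold z. destruct (Nat.ltb_spec (k + c + 1) c). lia. destruct (Nat.eqb_spec (k + c + 1) c). lia.
    f_equal. lia. }
  exists z. split.
  - exists cx, c. split; auto. split; auto. right. split. lia.
    intros k. unfold hinp. rewrite Hc1, Hc2, Hc3. split.
    + eexists. split. apply Phi_complete. apply HqF.
      unfold E2e. rewrite den_ifz, eqM_den. autorewrite with dn. fold bx. rewrite Nat.sub_diag. simpl.
      symmetry. apply Hzx.
    + eexists. split. apply Phi_complete. apply HqF'.
      unfold E2e'. rewrite den_ifz, eqM_den. autorewrite with dn. fold bx. rewrite Nat.sub_diag. simpl.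
      apply HgE.
  - exists y. split; [|reflexivity].
    exists c, cy. split; auto. split; auto. left. split. lia.
    intros k. unfold hinp. rewrite Hc1, Hc2, Hc3.
    assert (Hb : (b2n (y d) - bx) + (bx - b2n (y d)) <> 0).
    { unfold bx. destruct (x d), (y d); simpl; congruence. }
    split.
    + eexists. split. apply Phi_complete. apply HqF.
      unfold E2e. rewrite den_ifz, eqM_den. autorewrite with dn.
      destruct (b2n (y d) - bx + (bx - b2n (y d))) eqn:E. contradiction.
      unfold E1e. autorewrite with dn. rewrite E2. rewrite <- Hzx. f_equal.
    + eexists. split. apply Phi_complete. apply HqF'.
      unfold E2e'. rewrite den_ifz, eqM_den. autorewrite with dn.
      destruct (b2n (y d) - bx + (bx - b2n (y d))) eqn:E. contradiction.
      rewrite <- E1. apply HgE.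
Qed.

Lemma meq_connected2 : forall x y, meq x y -> exists j, j <= 2 /\ walk Gr j x y.
Proof.
  intros x y H. destruct (classic (exists d, x d <> y d)) as [Hd|Hd].
  - exists 2. split; auto. apply meq_walk2; auto.
  - exists 0. split; auto. simpl. apply functional_extensionality. intros i.
    apply NNPP. intros Hne. apply Hd. exists i; auto.
Qed.

Definition x0 : cantor := fun i => i =? 1.
Definition y0 : cantor := fun i => i =? 2.
Lemma meq_x0y0 : meq x0 y0.
Proof.
  split.
  - exists S. split. exists RSucc. intros; apply ev_succ. intros n; reflexivity.
  - exists pred. split. exists predR. intros; apply predR_ok. intros [|n]; reflexivity.
Qed.
Lemma x0y0_nadj : ~ Gr x0 y0.
Proof.
  intros [c1 [c2 [d1 [d2 H]]]].
  assert (c1 = 0) by (apply (decodes_uniq x0); auto; split; [reflexivity|intros; lia]).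
  assert (c2 = 0) by (apply (decodes_uniq y0); auto; split; [reflexivity|intros; lia]).
  subst. destruct H as [[H _]|[H _]]; lia.
Qed.
Lemma x0y0_ne : x0 <> y0.
Proof. intros H. apply (f_equal (fun f => f 1)) in H. discriminate. Qed.

Theorem theorem4p2 : pi02_graphable_diam meq 2.
Proof.
  exists Gr. split; [apply Gr_pi02|]. split; [apply Gr_simple|].
  assert (Hconn : forall x y, connected Gr x y <-> meq x y).
  { intros x y; split.
    - intros [k Hk]. eapply walk_meq; eauto.
    - intros H. destruct (meq_connected2 x y H) as [j [_ Hj]]. exists j; auto. }
  split; auto. split.
  - intros x y H. apply Hconn in H. apply meq_connected2; auto.
  - intros j Hj Hd. destruct (Hd x0 y0) as [i [Hi Hw]]. apply Hconn, meq_x0y0.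
    destruct i as [|[|i]]; try lia.
    + simpl in Hw. apply x0y0_ne; auto.
    + simpl in Hw. destruct Hw as [z [Hz Hz']]. subst. apply x0y0_nadj; auto.
Qed.
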